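(* Let $P$ be a set of $n$ points in general position in the plane such that the number $m$ of points of $P$ on the boundary of the convex hull of $P$ satisfies $m\geq 10$. Then $\mu(D(P))\geq\binom{n}{2}-5$.
   Context: General position means no three points collinear. $D(P)$ is the graph whose vertices are all closed segments with both endpoints in $P$, two adjacent iff disjoint. For a graph $G$ and $U\subseteq V(G)$, two distinct vertices $x,y\in U$ are $U$-mutually visible if $G$ contains a shortest $x$-$y$ path none of whose internal vertices lies in $U$; $U$ is a mutual-visibility set if every two distinct vertices of $U$ are $U$-mutually visible. $\mu(G)$ is the maximum size of a mutual-visibility set of $G$. *)

(* Defs.v *)
From HB Require Import structures.
From mathcomp Require Import all_boot all_order all_algebra.
From mathcomp Require Import boolp reals.
Set Implicit Arguments. Unset Strict Implicit. Unset Printing Implicit Defensive.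
Import Order.TTheory GRing.Theory Num.Theory.
Local Open Scope ring_scope.

Section Graphs.
Variables (V : finType) (e : rel V).

(* p is a walk from x to y: x :: p follows edges and ends at y; its length is size p *)
Definition walk (x y : V) (p : seq V) : Prop := path e x p /\ last x p = y.

Definition shortest_path (x y : V) (p : seq V) : Prop :=
  walk x y p /\ forall q, walk x y q -> (size p <= size q)%N.

Definition internal (p : seq V) : seq V := take (size p).-1 p.

Definition mutually_visible (U : {set V}) (x y : V) : Prop :=
  exists p, shortest_path x y p /\ forall v, v \in internal p -> v \notin U.

Definition mutual_visibility_set (U : {set V}) : Prop :=
  forall x y, x \in U -> y \in U -> x != y -> mutually_visible U x y.

Definition mu : nat := \max_(U : {set V} | `[< mutual_visibility_set U >]) #|U|.
End Graphs.

Section Geometry.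
Variable R : realType.
Notation pt := (R * R)%type.

Definition collinear (a b c : pt) : Prop :=
  (b.1 - a.1) * (c.2 - a.2) - (b.2 - a.2) * (c.1 - a.1) = 0.

Definition closed_segment (a b : pt) : pt -> Prop :=
  fun z => exists t : R, 0 <= t <= 1 /\
    z = ((1 - t) * a.1 + t * b.1, (1 - t) * a.2 + t * b.2).

Variable n : nat.
Variable p : 'I_n -> pt.

Definition general_position : Prop :=
  forall i j k : 'I_n, i != j -> j != k -> i != k -> ~ collinear (p i) (p j) (p k).

Definition conv_hull : pt -> Prop :=
  fun z => exists w : 'I_n -> R, (forall i, 0 <= w i) /\ \sum_i w i = 1 /\
    z = (\sum_i w i * (p i).1, \sum_i w i * (p i).2).

Definition on_boundary (A : pt -> Prop) (z : pt) : Prop :=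
  forall eps : R, 0 < eps ->
    (exists x, A x /\ (x.1 - z.1) ^+ 2 + (x.2 - z.2) ^+ 2 < eps ^+ 2) /\
    (exists x, ~ A x /\ (x.1 - z.1) ^+ 2 + (x.2 - z.2) ^+ 2 < eps ^+ 2).

Definition num_hull_boundary : nat :=
  #|[set i : 'I_n | `[< on_boundary conv_hull (p i) >]]|.

(* vertices of D(P): the segments with both endpoints in P, i.e. 2-subsets *)
Definition seg_vertex := {S : {set 'I_n} | #|S| == 2%N}.

Definition seg_points (S : seg_vertex) : pt -> Prop :=
  fun z => exists i j, val S = [set i; j] /\ closed_segment (p i) (p j) z.

Definition D_adj : rel seg_vertex :=
  fun S T => `[< ~ exists z, seg_points S z /\ seg_points T z >].
End Geometry.

(* Main.v *)
Require Import Defs.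
From HB Require Import structures.
From mathcomp Require Import all_boot all_order all_algebra.
From mathcomp Require Import boolp reals.
From mathcomp Require Import ring lra zify.
Import Order.TTheory GRing.Theory Num.Theory.
Set Implicit Arguments. Unset Strict Implicit. Unset Printing Implicit Defensive.

Section Alg.
Variable R : realType.
Local Open Scope ring_scope.

Definition orient (a b c : R * R) : R :=
  (b.1 - a.1) * (c.2 - a.2) - (b.2 - a.2) * (c.1 - a.1).

Lemma orient_swap a b c : orient b a c = - orient a b c.
Proof. rewrite /orient; ring. Qed.
Lemma orient_cyc a b c : orient b c a = orient a b c.
Proof. rewrite /orient; ring. Qed.
Lemma orient_swap23 a b c : orient a c b = - orient a b c.
Proof. rewrite /orient; ring. Qed.
Lemma orient_aba a b : orient a b a = 0.
Proof. rewrite /orient; ring. Qed.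
Lemma orient_abb a b : orient a b b = 0.
Proof. rewrite /orient; ring. Qed.

Lemma orient_conv a b (P Q : R * R) t :
  orient a b ((1 - t) * P.1 + t * Q.1, (1 - t) * P.2 + t * Q.2)
  = (1 - t) * orient a b P + t * orient a b Q.
Proof. rewrite /orient /=; ring. Qed.

Lemma trans_cross (b y c x : R * R) (N1 N2 : R) :
  (N1 != 0) || (N2 != 0) ->
  0 <= N1 * (y.1 - b.1) + N2 * (y.2 - b.2) ->
  0 <= N1 * (c.1 - b.1) + N2 * (c.2 - b.2) ->
  0 <= N1 * (x.1 - b.1) + N2 * (x.2 - b.2) ->
  0 < orient b y c -> 0 < orient b c x -> orient b y x != 0 ->
  0 < orient b y x.
Proof.
move=> HN Hu Hv Hw H1 H2 H3.
set Nu := N1 * (y.1 - b.1) + N2 * (y.2 - b.2) in Hu *.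
set Nv := N1 * (c.1 - b.1) + N2 * (c.2 - b.2) in Hv *.
set Nw := N1 * (x.1 - b.1) + N2 * (x.2 - b.2) in Hw *.
have id0 : orient b y c * Nw + orient b c x * Nu - orient b y x * Nv = 0.
  rewrite /Nu /Nv /Nw /orient; ring.
have idA : N1 * orient b y c = (c.2 - b.2) * Nu - (y.2 - b.2) * Nv.
  rewrite /Nu /Nv /orient; ring.
have idB : N2 * orient b y c = (y.1 - b.1) * Nv - (c.1 - b.1) * Nu.
  rewrite /Nu /Nv /orient; ring.
rewrite lt_neqAle eq_sym H3 /=.
rewrite leNgt; apply/negP => Hneg.
have t1 : 0 <= orient b y c * Nw by apply: mulr_ge0; lra.
have t2 : 0 <= orient b c x * Nu by apply: mulr_ge0; lra.
have t3 : 0 <= - orient b y x * Nv by apply: mulr_ge0; lra.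
have e2 : orient b c x * Nu = 0 by lra.
have e3 : - orient b y x * Nv = 0 by lra.
have Nu0 : Nu = 0.
  by move/eqP: e2; rewrite mulf_eq0 => /orP [/eqP h|/eqP //]; lra.
have Nv0 : Nv = 0.
  by move/eqP: e3; rewrite mulf_eq0 => /orP [/eqP h|/eqP //]; lra.
rewrite Nu0 Nv0 !mulr0 subr0 in idA idB.
case/orP: HN => /negPf HN.
- by move/eqP: idA; rewrite mulf_eq0 HN /= => /eqP h; lra.
- by move/eqP: idB; rewrite mulf_eq0 HN /= => /eqP h; lra.
Qed.

Lemma mul_lower (c d e : R) : - e <= d -> d <= e -> - (`|c| * e) <= c * d.
Proof.
move=> h1 h2; have [c0|c0] := lerP 0 c.
- rewrite ger0_norm //; nra.
- rewrite ltr0_norm //; nra.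
Qed.

Lemma sq_bound (d e : R) : 0 < e -> d ^+ 2 < e ^+ 2 -> - e <= d /\ d <= e.
Proof. move=> he hd; split; nra. Qed.

End Alg.

Local Open Scope ring_scope.

Section Inside.
Variable R : realType.
Variable n : nat.
Variable p : 'I_n -> (R * R)%type.

Lemma sum_ind (j : 'I_n) (G : 'I_n -> R) : \sum_i (i == j)%:R * G i = G j.
Proof.
rewrite (bigD1 j) //= eqxx mul1r big1 ?addr0 // => i /negPf ->; by rewrite mul0r.
Qed.

Lemma sum3 (j k l : 'I_n) (A B C : R) (F : 'I_n -> R) :
  \sum_i (A * (i == j)%:R + B * (i == k)%:R + C * (i == l)%:R) * F i
  = A * F j + B * F k + C * F l.
Proof.
rewrite -(sum_ind j (fun i => A * F i)) -(sum_ind k (fun i => B * F i)).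
rewrite -(sum_ind l (fun i => C * F i)) -!big_split /=.
by apply: eq_bigr => i _; ring.
Qed.

Lemma inside_not_boundary (j k l : 'I_n) (z : R * R) :
  0 < orient (p j) (p k) z -> 0 < orient (p k) (p l) z -> 0 < orient (p l) (p j) z ->
  ~ on_boundary (conv_hull p) z.
Proof.
move=> H1 H2 H3 Hb.
set P := p j; set Q := p k; set S := p l.
set m := Num.min (orient P Q z) (Num.min (orient Q S z) (orient S P z)).
have m1 : m <= orient P Q z by rewrite /m ge_min lexx.
have m2 : m <= orient Q S z by rewrite /m !ge_min lexx orbT.
have m3 : m <= orient S P z by rewrite /m !ge_min lexx !orbT.
have m0 : 0 < m by rewrite /m !lt_min H1 H2 H3.
set K := 1 + (`|S.1 - Q.1| + `|S.2 - Q.2|) + (`|P.1 - S.1| + `|P.2 - S.2|)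
          + (`|Q.1 - P.1| + `|Q.2 - P.2|).
have K1 : 1 <= K.
  rewrite /K; set a := (X in 1 + X + _ + _); set b := (X in 1 + _ + X + _);
  set c := (X in 1 + _ + _ + X).
  have : 0 <= a by rewrite /a addr_ge0.
  have : 0 <= b by rewrite /b addr_ge0.
  have : 0 <= c by rewrite /c addr_ge0.
  lra.
set eps := m / K.
have eps0 : 0 < eps by rewrite /eps divr_gt0 //; lra.
have Keps : K * eps = m.
  rewrite /eps mulrCA mulfV ?mulr1 //; apply/eqP; lra.
have [_ [x [Hx Hd]]] := Hb eps eps0.
apply: Hx.
have [dx1 dx2] : - eps <= x.1 - z.1 /\ x.1 - z.1 <= eps.
  apply: sq_bound => //. have := sqr_ge0 (x.2 - z.2). lra.
have [dy1 dy2] : - eps <= x.2 - z.2 /\ x.2 - z.2 <= eps.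
  apply: sq_bound => //. have := sqr_ge0 (x.1 - z.1). lra.
have bnd : forall A B : R * R, - ((`|B.1 - A.1| + `|B.2 - A.2|) * eps) <= orient A B x - orient A B z.
  move=> A B.
  have -> : orient A B x - orient A B z = (B.1 - A.1) * (x.2 - z.2) + (- (B.2 - A.2)) * (x.1 - z.1).
    rewrite /orient; ring.
  have h1 := mul_lower (B.1 - A.1) dy1 dy2.
  have h2 := mul_lower (- (B.2 - A.2)) dx1 dx2.
  rewrite normrN in h2. lra.
have Kexp : K * eps = eps + (`|S.1 - Q.1| + `|S.2 - Q.2|) * eps + (`|P.1 - S.1| + `|P.2 - S.2|) * eps
          + (`|Q.1 - P.1| + `|Q.2 - P.2|) * eps by rewrite /K; ring.
have g1 : 0 <= orient Q S x.
  have := bnd Q S. have : 0 <= (`|P.1 - S.1| + `|P.2 - S.2|) * eps by apply: mulr_ge0; [rewrite addr_ge0|lra].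
  have : 0 <= (`|Q.1 - P.1| + `|Q.2 - P.2|) * eps by apply: mulr_ge0; [rewrite addr_ge0|lra].
  lra.
have g2 : 0 <= orient S P x.
  have := bnd S P. have : 0 <= (`|S.1 - Q.1| + `|S.2 - Q.2|) * eps by apply: mulr_ge0; [rewrite addr_ge0|lra].
  have : 0 <= (`|Q.1 - P.1| + `|Q.2 - P.2|) * eps by apply: mulr_ge0; [rewrite addr_ge0|lra].
  lra.
have g3 : 0 <= orient P Q x.
  have := bnd P Q. have : 0 <= (`|S.1 - Q.1| + `|S.2 - Q.2|) * eps by apply: mulr_ge0; [rewrite addr_ge0|lra].
  have : 0 <= (`|P.1 - S.1| + `|P.2 - S.2|) * eps by apply: mulr_ge0; [rewrite addr_ge0|lra].
  lra.
set D := orient P Q S.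
have HD : D = orient P Q z + orient Q S z + orient S P z by rewrite /D /orient; ring.
have D0 : 0 < D by lra.
have Dx : D = orient Q S x + orient S P x + orient P Q x by rewrite /D /orient; ring.
exists (fun i => orient Q S x / D * (i == j)%:R + orient S P x / D * (i == k)%:R
                 + orient P Q x / D * (i == l)%:R).
split; [|split].
- move=> i; rewrite !addr_ge0 // mulr_ge0 ?ler0n ?divr_ge0 //; lra.
- have := sum3 j k l (orient Q S x / D) (orient S P x / D) (orient P Q x / D) (fun _ => 1).
  under eq_bigr do rewrite mulr1.
  move=> ->; rewrite !mulr1 -!mulrDl -Dx mulfV //; lra.
- rewrite sum3 sum3 -/P -/Q -/S.
  have Dn : orient Q S x + orient S P x + orient P Q x != 0 by rewrite -Dx gt_eqF.
  rewrite [x]surjective_pairing; congr pair; rewrite Dx; move: Dn;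
  rewrite /orient /= => Dn; field => //.
Qed.

End Inside.

Local Open Scope ring_scope.

Section Cyc.
Variable R : realType.
Variable n : nat.
Variable p : 'I_n -> (R * R)%type.
Hypothesis inj : injective p.
Hypothesis GP : general_position p.

Definition good (b c : 'I_n) : bool :=
  (c != b) && [forall x, ((x != b) && (x != c)) ==> (0 < orient (p b) (p c) (p x))].

Definition WE (b : 'I_n) : Prop := exists N1 N2 : R, ((N1 != 0) || (N2 != 0)) /\
  forall x, 0 <= N1 * ((p x).1 - (p b).1) + N2 * ((p x).2 - (p b).2).

Lemma gp_orient i j k : i != j -> j != k -> i != k -> orient (p i) (p j) (p k) != 0.
Proof. by move=> h1 h2 h3; apply/eqP; exact: GP. Qed.

Lemma goodP b c x : good b c -> x != b -> x != c -> 0 < orient (p b) (p c) (p x).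
Proof. by case/andP=> _ /forallP /(_ x) /implyP h xb xc; apply: h; rewrite xb xc. Qed.

Lemma good_neq b c : good b c -> c != b.
Proof. by case/andP. Qed.

Lemma next_exists b (c0 : 'I_n) : c0 != b -> WE b -> exists c, good b c.
Proof.
move=> c0b [N1 [N2 [HN HW]]].
pose cnt c := #|[set x | 0 < orient (p b) (p c) (p x)]|.
case: (@arg_maxnP _ c0 (fun c => c != b) cnt c0b) => c cb Hmax.
exists c; rewrite /good cb /=; apply/forallP => x; apply/implyP => /andP [xb xc].
rewrite ltNge; apply/negP => Hle.
have Hlt : orient (p b) (p c) (p x) < 0.
  rewrite lt_neqAle Hle andbT; apply: gp_orient => //; by rewrite eq_sym.
have Hbxc : 0 < orient (p b) (p x) (p c) by rewrite orient_swap23; lra.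
have Hsub : [set y | 0 < orient (p b) (p c) (p y)] \proper [set y | 0 < orient (p b) (p x) (p y)].
  apply/properP; split.
  - apply/subsetP => y; rewrite !inE => Hy.
    have yb : y != b by apply/eqP => e; move: Hy; rewrite e orient_aba ltxx.
    have yx : y != x by apply/eqP => e; move: Hy; rewrite e; lra.
    apply: (@trans_cross _ (p b) (p x) (p c) (p y) N1 N2) => //.
    apply: gp_orient => //; by rewrite eq_sym.
  - exists c; by rewrite !inE ?orient_abb ?ltxx.
have := Hmax x xb; rewrite /cnt => H.
by move: (proper_card Hsub); rewrite ltnNge; move: H => /= ->.
Qed.

Lemma good_WE b c : good b c -> WE c.
Proof.
move=> Hg; exists (- ((p c).2 - (p b).2)), ((p c).1 - (p b).1); split.
- rewrite -negb_and; apply/negP => /andP [h1 h2].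
  move: h1; rewrite oppr_eq0 subr_eq0 => /eqP h1.
  move: h2; rewrite subr_eq0 => /eqP h2.
  have : p c = p b by move: h1 h2; case: (p c) => ? ?; case: (p b) => ? ? /= -> ->.
  by move/inj/eqP; rewrite (negPf (good_neq Hg)).
- move=> x.
  have -> : - ((p c).2 - (p b).2) * ((p x).1 - (p c).1) + ((p c).1 - (p b).1) * ((p x).2 - (p c).2)
      = orient (p b) (p c) (p x) by rewrite /orient; ring.
  have [->|xb] := eqVneq x b; first by rewrite orient_aba.
  have [->|xc] := eqVneq x c; first by rewrite orient_abb.
  by apply/ltW/goodP.
Qed.


Lemma ivt (f : nat -> bool) m : (0 < m)%N -> f 1%N -> ~~ f m ->
  exists t, [/\ (0 < t)%N, (t < m)%N, f t & ~~ f t.+1].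
Proof.
elim: m => [//|m IH] _ f1 fm.
case: m IH fm => [|m] IH fm; first by rewrite f1 in fm.
case Hm: (f m.+1).
- by exists m.+1; rewrite Hm fm.
- have [|t [t0 tm ft ft1]] := IH isT f1; first by rewrite Hm.
  by exists t; rewrite t0 ft ft1 ltnS ltnW.
Qed.

Definition succ (b : 'I_n) : 'I_n := odflt b [pick c | good b c].

Lemma succ_good b : (exists c0 : 'I_n, c0 != b) -> WE b -> good b (succ b).
Proof.
move=> [c0 c0b] HW; rewrite /succ; case: pickP => [c //|H].
have [c Hc] := next_exists c0b HW; by rewrite H in Hc.
Qed.

Lemma start_WE (a : 'I_n) : exists a0, WE a0.
Proof.
case: (@arg_minP _ R _ a xpredT (fun i => (p i).1) isT) => a0 _ Hmin.
exists a0, 1, 0; split; first by rewrite oner_eq0.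
move=> x; rewrite mul0r addr0 mul1r subr_ge0; exact: Hmin.
Qed.

Lemma cycle_exists : (2 <= n)%N -> exists k (c : nat -> 'I_n),
  [/\ (2 <= k)%N, forall t, good (c t) (c t.+1), c k = c 0%N &
      forall t1 t2, (t1 < k)%N -> (t2 < k)%N -> c t1 = c t2 -> t1 = t2].
Proof.
move=> n2.
have : (1 < #|'I_n|)%N by rewrite card_ord.
case/card_gt1P => x [y [_ _ xy]].
have oth : forall b : 'I_n, exists c0, c0 != b.
  move=> b; case: (eqVneq x b) => [e|h]; last by exists x.
  by exists y; rewrite -e eq_sym.
have [a0 Ha0] := start_WE x.
pose a t := iter t succ a0.
have HW : forall t, WE (a t).
  elim=> [|t IH] //=; exact: good_WE (succ_good (oth _) IH).
have Hg : forall t, good (a t) (a t.+1) by move=> t; exact: succ_good (oth _) (HW t).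
pose f (t : 'I_n.+1) := a t.
have : ~~ injectiveb f.
  by apply/negP => /injectiveP /leq_card; rewrite !card_ord ltnn.
case/injectivePn => t1 [t2 t12 e12].
have exP : exists j, [exists i : 'I_j, a i == a j].
  case: (ltngtP t1 t2) => h.
  - by exists t2; apply/existsP; exists (Ordinal h); apply/eqP.
  - by exists t1; apply/existsP; exists (Ordinal h); apply/eqP.
  - by move: t12; rewrite -val_eqE /= h eqxx.
case: (ex_minnP exP) => j /existsP [i /eqP Hij] Hmin.
have Hdist : forall i1 i2, (i1 < i2)%N -> (i2 < j)%N -> a i1 != a i2.
  move=> i1 i2 h12 h2j; apply/negP => /eqP e.
  have : [exists i : 'I_i2, a i == a i2] by apply/existsP; exists (Ordinal h12); apply/eqP.
  by move/Hmin; rewrite leqNgt h2j.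
have ij : (i < j)%N := ltn_ord i.
exists (j - i)%N, (fun t => a (i + t)%N); split.
- case E: (j - i)%N => [|[|m]] //; first by move: ij; rewrite -subn_gt0 E.
  have : a (i + 1)%N = a i by rewrite -E subnKC ?Hij // ltnW.
  by move/eqP; rewrite addn1 (negPf (good_neq (Hg i))).
- by move=> t; rewrite addnS.
- by rewrite subnKC ?addn0 ?Hij // ltnW.
- move=> u1 u2 h1 h2 e.
  have h1' : (i + u1 < j)%N by rewrite -ltn_subRL.
  have h2' : (i + u2 < j)%N by rewrite -ltn_subRL.
  case: (ltngtP u1 u2) => // h.
  + by move: (Hdist (i + u1)%N (i + u2)%N); rewrite ltn_add2l h h2' e eqxx => /(_ isT isT).
  + by move: (Hdist (i + u2)%N (i + u1)%N); rewrite ltn_add2l h h1' e eqxx => /(_ isT isT).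
Qed.

Lemma fan k (c : nat -> 'I_n) b : (2 <= k)%N -> (forall t, good (c t) (c t.+1)) -> c k = c 0%N ->
  (forall t1 t2, (t1 < k)%N -> (t2 < k)%N -> c t1 = c t2 -> t1 = t2) ->
  (forall t, (t < k)%N -> b != c t) -> ~ on_boundary (conv_hull p) (p b).
Proof.
move=> k2 Hg Hck Hinj Hb.
have bk : b != c k by rewrite Hck; apply: Hb; apply: leq_trans k2.
pose f t := 0 < orient (p (c 0%N)) (p (c t)) (p b).
have k0 : (0 < k)%N by apply: leq_trans k2.
have f1 : f 1%N by apply: goodP; [exact: Hg| apply: Hb| apply: Hb].
have kp : k.-1.+1 = k by rewrite prednK.
have hk1 : (k.-1 < k)%N by rewrite -{2}kp.
have fk : ~~ f k.-1.
  have h : 0 < orient (p (c k.-1)) (p (c k.-1.+1)) (p b).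
    by apply: goodP; [exact: Hg| exact: Hb | rewrite kp; exact: bk].
  rewrite kp Hck orient_swap oppr_gt0 in h; by rewrite /f -leNgt ltW.
have k1 : (0 < k.-1)%N by rewrite ltn_predRL.
have [t [t0 tk ft ft1]] := @ivt f k.-1 k1 f1 fk.
have tk' : (t.+1 < k)%N by rewrite -kp ltnS.
have tk'' : (t < k)%N by apply: ltn_trans tk'.
have ne : orient (p (c 0%N)) (p (c t.+1)) (p b) != 0.
  apply: gp_orient.
  - by apply/eqP => /Hinj h; move: (h k0 tk').
  - by rewrite eq_sym Hb.
  - by rewrite eq_sym Hb.
have neg : orient (p (c 0%N)) (p (c t.+1)) (p b) < 0.
  by rewrite lt_neqAle ne /= leNgt.
apply: (@inside_not_boundary _ _ p (c 0%N) (c t) (c t.+1)) => //.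
- by apply: goodP; [exact: Hg | apply: Hb | apply: Hb].
- by rewrite orient_swap oppr_gt0.
Qed.


End Cyc.


Local Close Scope ring_scope.
Lemma pigeon (T : finType) (w : 'I_5 -> {set T}) (Z : {set T}) :
  (forall r r', r != r' -> [disjoint w r & w r']) -> #|Z| <= 4 ->
  exists r, [disjoint w r & Z].
Proof.
move=> Hd HZ.
case: (boolP [exists r, [disjoint w r & Z]]) => [/existsP //|/existsPn H].
have : forall r, exists z, z \in w r :&: Z.
  move=> r; have := H r; rewrite -setI_eq0 => /set0Pn [z hz]; by exists z.
case/fin_all_exists => g Hg.
have ginj : injective g.
  move=> r r' e; apply/eqP; apply/negP => /negP ne.
  have := Hd r r' ne; rewrite -setI_eq0 => /eqP/setP/(_ (g r)).
  have := Hg r; have := Hg r'; rewrite e !inE => /andP [-> _] /andP [-> _] //.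
have : #|g @: [set: 'I_5]| <= #|Z|.
  apply: subset_leq_card; apply/subsetP => z /imsetP [r _ ->].
  by have := Hg r; rewrite inE => /andP [].
by rewrite card_imset // cardsT card_ord => h; move: (leq_trans h HZ).
Qed.

Section Final.
Variable R : realType.
Variable n : nat.
Variable p : 'I_n -> (R * R)%type.

Lemma no_common (a b : 'I_n) (S T : seg_vertex n) :
  good p a b -> [disjoint val S & [set a; b]] -> val T = [set a; b] ->
  ~ exists z, seg_points p S z /\ seg_points p T z.
Proof.
move=> Hg Hd HT [z [[i [j [HS [t [Ht ->]]]]] [i' [j' [HT' [t' [Ht' Hz]]]]]]].
have inS : forall x, x \in val S -> (0 < orient (p a) (p b) (p x))%R.
  move=> x hx; have := disjointFr Hd hx; rewrite !inE => /norP [xa xb].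
  exact: goodP.
have inT : forall x, x \in val T -> orient (p a) (p b) (p x) = 0%R.
  by move=> x; rewrite HT !inE => /orP [/eqP ->|/eqP ->]; rewrite ?orient_aba ?orient_abb.
have hi := inS i; have hj := inS j; rewrite HS !inE !eqxx ?orbT in hi hj.
have hi' := inT i'; have hj' := inT j'; rewrite HT' !inE !eqxx ?orbT in hi' hj'.
have := congr1 (orient (p a) (p b)) Hz.
rewrite !orient_conv hi' // hj' // !mulr0 addr0 => e.
have := hi isT; have := hj isT; move: e Ht; clear; set u := orient _ _ (p i); set v := orient _ _ (p j).
move=> e /andP [t0 t1] hv hu; nra.
Qed.

Lemma seg_adj (a b : 'I_n) (S T : seg_vertex n) :
  good p a b -> [disjoint val S & [set a; b]] -> val T = [set a; b] ->
  D_adj p S T /\ D_adj p T S.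
Proof.
move=> Hg Hd HT; split; apply/asboolP.
- exact: no_common Hg Hd HT.
- move=> [z [h1 h2]]; apply: (no_common Hg Hd HT); by exists z.
Qed.

End Final.

Unset Implicit Arguments. Set Strict Implicit.
Theorem lemma18 (R : realType) (n : nat) (p : 'I_n -> (R * R)%type) :
  injective p ->
  general_position p ->
  (10 <= num_hull_boundary p)%N ->
  ('C(n, 2) - 5 <= mu (D_adj p))%N.
Proof.
move=> inj GP H10.
have n10 : (10 <= n)%N.
  by apply: (leq_trans H10); rewrite /num_hull_boundary; apply: leq_trans (max_card _) _; rewrite card_ord.
have [k [c [k2 Hg Hck Hinj]]] := cycle_exists inj GP (leq_trans (isT : (2 <= 10)%N) n10).
have Esub : [set i | `[< on_boundary (conv_hull p) (p i) >]] \subset [set c (val t) | t : 'I_k].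
  apply/subsetP => b; rewrite inE => /asboolP Hb; apply/imsetP.
  case: (boolP [exists t : 'I_k, b == c t]) => [/existsP [t /eqP ->]| /existsPn H].
    by exists t.
  exfalso; apply: (fan GP k2 Hg Hck Hinj _ Hb) => t tk; exact: H (Ordinal tk).
have k10 : (10 <= k)%N.
  apply: (leq_trans H10); apply: (leq_trans (subset_leq_card Esub)).
  by apply: leq_trans (leq_imset_card _ _) _; rewrite card_ord.
pose w (r : 'I_5) := [set c (2 * r)%N; c (2 * r).+1].
have Hw2 : forall r, #|w r| == 2.
  move=> r; rewrite cards2.
  have -> : c (2 * r)%N != c (2 * r).+1 by apply/eqP => /Hinj; have := ltn_ord r; move=> hr h; have := h ltac:(lia) ltac:(lia); lia.
  by [].
pose wv r : seg_vertex n := exist _ (w r) (Hw2 r).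
have Hdisj : forall r r', r != r' -> [disjoint w r & w r'].
  move=> r r' ne; rewrite -setI_eq0; apply/eqP/setP => z; rewrite !inE.
  have hr := ltn_ord r; have hr' := ltn_ord r'.
  have ne' : (r : nat) != r' by [].
  apply/negP => /andP [/orP [/eqP e1|/eqP e1] /orP [/eqP e2|/eqP e2]];
    rewrite e1 in e2; move/Hinj: e2 => e2; move: ne'; 
    (have := e2 ltac:(lia) ltac:(lia)); lia.
pose W := [set wv r | r : 'I_5].
pose U := ~: W.
have cardU : ('C(n, 2) - 5 <= #|U|)%N.
  rewrite /U cardsCs setCK.
  have -> : #|{: seg_vertex n}| = 'C(n, 2).
    by rewrite card_sig -[in RHS](card_ord n) -card_draws cardsE.
  apply: leq_sub2l; apply: leq_trans (leq_imset_card _ _) _; by rewrite card_ord.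
apply: (leq_trans cardU).
rewrite /mu; apply: (leq_bigmax_cond U); apply/asboolP.
move=> x y xU yU xy.
case Hxy: (D_adj p x y).
- exists [:: y]; split; last by [].
  split; first by split => //=; rewrite Hxy.
  move=> q [_ Hl]; case: q Hl => [/= e|//]; by rewrite e eqxx in xy.
- have Z4 : (#|val x :|: val y| <= 4)%N.
    apply: leq_trans (leq_card_setU _ _).1 _.
    by rewrite (eqP (valP x)) (eqP (valP y)).
  have [r Hr] := pigeon Hdisj Z4.
  have d1 : [disjoint val x & [set c (2 * r)%N; c (2 * r).+1]].
    rewrite disjoint_sym; apply: disjointWr Hr; exact: subsetUl.
  have d2 : [disjoint val y & [set c (2 * r)%N; c (2 * r).+1]].
    rewrite disjoint_sym; apply: disjointWr Hr; exact: subsetUr.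
  have [a1 _] := seg_adj (T := wv r) (Hg _) d1 erefl.
  have [_ a2] := seg_adj (T := wv r) (Hg _) d2 erefl.
  exists [:: wv r; y]; split.
  + split; first by split => //=; rewrite a1 a2.
    move=> q [Hp Hl]; case: q Hp Hl => [|z [|z' q]] //=.
    * by move=> _ e; rewrite e eqxx in xy.
    * by move=> /andP [h _] e; rewrite -e h in Hxy.
  + move=> v; rewrite /internal /= inE => /eqP ->.
    by rewrite /U inE negbK; apply/imsetP; exists r.
Qed.
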